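(* Let $\mathbf{X}\in\mathbb{R}^{n\times d}$ have rows $\mathbf{X}_1,\ldots,\mathbf{X}_n$ and columns $\mathbf{X}_{\cdot 1},\ldots,\mathbf{X}_{\cdot d}$, let $u$ be a utility function, $H(\mathbf{z})=-\frac1n\sum_{j=1}^n u(z_j)$ for $\mathbf{z}\in\mathbb{R}^n$, $h(\mathbf{w})=H(\mathbf{X}\mathbf{w})$, assume $h$ is proper convex with Lipschitz continuous gradient, and let $\lambda>0$. The primal problem $\min_{\mathbf{w}\in\mathbb{R}^d_+}h(\mathbf{w})+\lambda\|\mathbf{w}\|_1$ and its Fenchel–Rockafellar dual are $$\mathbf{w}^*\in\arg\min_{\mathbf{w}\in\mathcal{C}_P}\mathcal{P}_\lambda(\mathbf{w}):=-\frac1n\sum_{j=1}^n u(\mathbf{w}^{\top}\mathbf{X}_j)+\lambda\|\mathbf{w}\|_1,\qquad \boldsymbol{\theta}^*\in\arg\max_{\boldsymbol{\theta}\in\mathcal{C}_D}\mathcal{D}_\lambda(\boldsymbol{\theta}):=\frac1n\sum_{j=1}^n u^*(n\lambda\theta_j),$$ where $\mathcal{C}_P=\mathrm{dom}(\mathcal{P}_\lambda)\cap\mathbb{R}^d_+$ and $\mathcal{C}_D=\mathrm{dom}(\mathcal{D}_\lambda)\cap\{\boldsymbol{\theta}\in\mathbb{R}^n:\|\phi(\mathbf{X}^{\top}\boldsymbol{\theta})\|_\infty\leq1\}$. Moreover, for such an optimal primal-dual pair $(\mathbf{w}^*,\boldsymbol{\theta}^* )\in\mathcal{C}_P\times\mathcal{C}_D$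 the optimality conditions read: $-\lambda\boldsymbol{\theta}^*=\nabla_{\mathbf{z}}H(\mathbf{X}\mathbf{w}^* )$, and for each $j\in[d]$: if $w_j^*=0$ then $\phi(\mathbf{X}_{\cdot j}^{\top}\boldsymbol{\theta}^* )\leq1$; if $w_j^*\neq0$ then $\phi(\mathbf{X}_{\cdot j}^{\top}\boldsymbol{\theta}^* )=1$ and $\boldsymbol{\theta}^{*\top}\mathbf{X}_{\cdot j}w_j^*=|w_j^*|$.
   Context: A utility function is an increasing concave function $u$. $u^*$ denotes the conjugate of $u$ appearing in the duality, namely $u^*(\theta)=\inf_z\{\theta z-u(z)\}$ (so that $H^*(-\lambda\boldsymbol{\theta})=-\frac1n\sum_j u^*(n\lambda\theta_j)$ where $H^*$ is the convex conjugate of $H$). $\phi(x)=\max\{x,0\}$ applied entrywise, and inequalities between vectors are entrywise. $\mathrm{dom}$ denotes the effective domain (where the function is finite). *)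

(* Defs.v *)
From HB Require Import structures.
From mathcomp Require Import all_boot all_order all_algebra.
From mathcomp Require Import all_classical all_reals all_analysis.
Set Implicit Arguments. Unset Strict Implicit. Unset Printing Implicit Defensive.
Import Order.TTheory GRing.Theory Num.Theory.
Import numFieldNormedType.Exports.
Local Open Scope classical_set_scope.
Local Open Scope ring_scope.

Section Defs.
Variable R : realType.

Definition concave_fun (u : R -> R) : Prop :=
  forall a x y : R, 0 <= a <= 1 -> a * u x + (1 - a) * u y <= u (a * x + (1 - a) * y).

Definition utility (u : R -> R) : Prop :=
  {homo u : x y / x < y} /\ concave_fun u.

Definition convex_fun (d : nat) (f : 'cV[R]_d -> R) : Prop :=
  forall (a : R) (x y : 'cV[R]_d), 0 <= a <= 1 ->
    f (a *: x + (1 - a) *: y) <= a * f x + (1 - a) * f y.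

Definition phi (x : R) : R := Num.max x 0.

Definition norminf (m : nat) (v : 'cV[R]_m) : R := \big[Num.max/0]_(k < m) `|v k ord0|.

Definition Hfun (n : nat) (u : R -> R) (z : 'cV[R]_n) : R :=
  - (n%:R)^-1 * \sum_(j < n) u (z j ord0).

Definition hfun (n d : nat) (u : R -> R) (X : 'M[R]_(n, d)) (w : 'cV[R]_d) : R :=
  Hfun u (X *m w).

Definition uconj (u : R -> R) (t : R) : \bar R :=
  ereal_inf [set ((t * z - u z)%:E) | z in [set: R]].

Definition Pobj (n d : nat) (u : R -> R) (lam : R) (X : 'M[R]_(n, d))
  (w : 'cV[R]_d) : \bar R :=
  (- (n%:R)^-1 * \sum_(j < n) u (\sum_(k < d) w k ord0 * X j k)
   + lam * \sum_(k < d) `|w k ord0|)%:E.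

Definition Dobj (n : nat) (u : R -> R) (lam : R) (th : 'cV[R]_n) : \bar R :=
  ((n%:R)^-1)%:E * (\sum_(j < n) uconj u (n%:R * lam * th j ord0))%E.

Definition domP (n d : nat) u lam (X : 'M[R]_(n, d)) : set 'cV[R]_d :=
  [set w | (Pobj u lam X w < +oo)%E].
Definition domD (n : nat) u lam : set 'cV[R]_n :=
  [set th | (-oo < Dobj u lam th)%E].

Definition CP (n d : nat) u lam (X : 'M[R]_(n, d)) : set 'cV[R]_d :=
  domP u lam X `&` [set w | forall k : 'I_d, 0 <= w k ord0].
Definition CD (n d : nat) u lam (X : 'M[R]_(n, d)) : set 'cV[R]_n :=
  domD u lam `&` [set th | norminf (map_mx phi (X^T *m th)) <= 1].

Definition fconj (m : nat) (F : 'cV[R]_m -> \bar R) (v : 'cV[R]_m) : \bar R :=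
  ereal_sup [set ((\sum_(i < m) v i ord0 * x i ord0)%:E - F x)%E | x in [set: 'cV[R]_m]].

Definition fpen (d : nat) (lam : R) (w : 'cV[R]_d) : \bar R :=
  if [forall k : 'I_d, 0 <= w k ord0] then (lam * \sum_(k < d) `|w k ord0|)%:E else +oo%E.

(* Fenchel--Rockafellar dual objective of  min_w f(w) + H(Xw),
   max_y -f^*(-X^T y) - H^*(y), written in the variable theta with y = -lambda theta *)
Definition FRdual (n d : nat) (u : R -> R) (lam : R) (X : 'M[R]_(n, d))
  (th : 'cV[R]_n) : \bar R :=
  (- fconj (fpen lam) (lam *: (X^T *m th))
   - fconj (fun z : 'cV[R]_n => (Hfun u z)%:E) (- lam *: th))%E.

End Defs.
Arguments phi {R}.

(* Main.v *)
Require Import Defs.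
From HB Require Import structures.
From mathcomp Require Import all_boot all_order all_algebra.
From mathcomp Require Import all_classical all_reals all_analysis.
From mathcomp Require Import ring lra.
Import Order.TTheory GRing.Theory Num.Theory.
Import numFieldNormedType.Exports.
Local Open Scope classical_set_scope.
Local Open Scope ring_scope.

Section S.
Context {R : realType}.
Lemma dnbhs_right (P : set R) :
  (\forall t \near (0:R)^', P t) -> \forall t \near (0:R)^'+, P t.
Proof.
rewrite !near_withinE; apply: filter_app; near=> t => h ht; apply: h.
by rewrite gt_eqF.
Unshelve. all: by end_near. Qed.

Lemma dnbhs_left (P : set R) :
  (\forall t \near (0:R)^', P t) -> \forall t \near (0:R)^'-, P t.
Proof.
rewrite !near_withinE; apply: filter_app; near=> t => h ht; apply: h.
by rewrite lt_eqF.
Unshelve. all: by end_near. Qed.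

Lemma cvg_right (f : R -> R) (l : R) : f x @[x --> (0:R)^'] --> l -> f x @[x --> (0:R)^'+] --> l.
Proof. move=> h; apply: cvg_trans _ h; apply: cvg_app => P; exact: dnbhs_right. Qed.
Lemma cvg_left (f : R -> R) (l : R) : f x @[x --> (0:R)^'] --> l -> f x @[x --> (0:R)^'-] --> l.
Proof. move=> h; apply: cvg_trans _ h; apply: cvg_app => P; exact: dnbhs_left. Qed.

Lemma lim_ge_right (f : R -> R) (l m e : R) : 0 < e -> f x @[x --> (0:R)^'] --> l ->
  (forall t, 0 < t < e -> m <= f t) -> m <= l.
Proof.
move=> e0 /cvg_right h H; apply: (cvgr_to_ge h).
near=> t; apply: H; apply/andP; split; first by near: t; exact: nbhs_right_gt.
near: t; exact: nbhs_right_lt.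
Unshelve. all: by end_near. Qed.

Lemma lim_le_right (f : R -> R) (l m e : R) : 0 < e -> f x @[x --> (0:R)^'] --> l ->
  (forall t, 0 < t < e -> f t <= m) -> l <= m.
Proof.
move=> e0 /cvg_right h H; apply: (cvgr_to_le h).
near=> t; apply: H; apply/andP; split; first by near: t; exact: nbhs_right_gt.
near: t; exact: nbhs_right_lt.
Unshelve. all: by end_near. Qed.

Lemma lim_ge_left (f : R -> R) (l m e : R) : 0 < e -> f x @[x --> (0:R)^'] --> l ->
  (forall t, - e < t < 0 -> m <= f t) -> m <= l.
Proof.
move=> e0 /cvg_left h H; apply: (cvgr_to_ge h).
near=> t; apply: H; apply/andP; split; last by near: t; exact: nbhs_left_lt.
near: t; apply: nbhs_left_gt; rewrite ltrNl oppr0 //.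
Unshelve. all: by end_near. Qed.

Lemma lim_le_left (f : R -> R) (l m e : R) : 0 < e -> f x @[x --> (0:R)^'] --> l ->
  (forall t, - e < t < 0 -> f t <= m) -> l <= m.
Proof.
move=> e0 /cvg_left h H; apply: (cvgr_to_le h).
near=> t; apply: H; apply/andP; split; last by near: t; exact: nbhs_left_lt.
near: t; apply: nbhs_left_gt; rewrite ltrNl oppr0 //.
Unshelve. all: by end_near. Qed.

Lemma dq_cvg (u : R -> R) (a b : R) : (forall x, derivable u x 1) ->
  (fun h => h^-1 * (u (h * b + a) - u a)) x @[x --> (0:R)^'] --> b * 'D_1 u a.
Proof.
move=> du.
have da : differentiable u a by apply/derivable1_diffP.
have : derivable u a b by apply: diff_derivable.
move=> /cvg_ex [l hl].
have hl' := hl.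
move/cvg_lim: hl => hl.
have -> : b * 'D_1 u a = l.
  rewrite -hl //= -/(derive u a b) !deriveE //.
  by rewrite -[in RHS](mulr1 b) -[b * 1]/(b *: 1) linearZ.
exact: hl'.
Qed.


Lemma tangent (u : R -> R) a y : @concave_fun R u -> (forall x, derivable u x 1) ->
  u y <= u a + 'D_1 u a * (y - a).
Proof.
move=> hc du.
suff : u y - u a <= (y - a) * 'D_1 u a by rewrite mulrC; lra.
apply: (@lim_ge_right _ _ _ 1 ltr01 (dq_cvg u a (y - a) du)) => // t /andP[t0 t1].
rewrite ler_pdivlMl //.
have := hc t y a; rewrite (ltW t0) (ltW t1) => /(_ isT).
have -> : t * y + (1 - t) * a = t * (y - a) + a by ring.
nra.
Qed.

Lemma subgrad_deriv (u : R -> R) a s : (forall x, derivable u x 1) ->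
  (forall y, u y <= u a + s * (y - a)) -> 'D_1 u a = s.
Proof.
move=> du hs; have hc := dq_cvg u a 1 du; rewrite mul1r in hc.
apply/eqP; rewrite eq_le; apply/andP; split.
  apply: (@lim_le_right _ _ _ 1 ltr01 hc) => // t /andP[t0 t1].
  rewrite ler_pdivrMl // mulr1; have := hs (t + a); lra.
apply: (@lim_ge_left _ _ _ 1 ltr01 hc) => // t /andP[t0 t1].
rewrite ler_ndivlMl // mulr1; have := hs (t + a); nra.
Qed.

Lemma sumsup_le n (g : 'I_n -> R -> R) (M : \bar R) :
  (forall f : 'I_n -> R, ((\sum_i g i (f i))%:E <= M)%E) ->
  (\sum_(i < n) ereal_sup [set (g i y)%:E | y in [set: R]] <= M)%E.
Proof.
elim: n g M => [|n IH] g M H.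
  by rewrite big_ord0; have := H (fun _ => 0); rewrite big_ord0.
rewrite big_ord_recl.
set T := (\sum_(i < n) _)%E.
have HT : forall y, ((g ord0 y)%:E + T <= M)%E.
  move=> y; rewrite -leeBrDl //; apply: IH => f.
  rewrite leeBrDl // -EFinD.
  have := H (fun i => if unlift ord0 i is Some j then f j else y).
  by rewrite big_ord_recl /= unlift_none; under eq_bigr do rewrite liftK.
case: T HT => [t| |] HT.
- rewrite -leeBrDr //; apply/ereal_supP => _ [y _ <-].
  by rewrite leeBrDr // HT.
- have hM : M = +oo%E.
    have := HT 0; rewrite addey // => h.
    by apply/eqP; rewrite eq_le leey.
  by rewrite hM leey.
- by rewrite addeNy leNye.
Qed.

Lemma phi_ge0 (x : R) : 0 <= phi x.
Proof. by rewrite /phi le_max lexx orbT. Qed.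

Lemma phi_norm (x : R) : `|phi x| = phi x.
Proof. by rewrite ger0_norm // phi_ge0. Qed.

Lemma phi_le1 (x : R) : (phi x <= 1) = (x <= 1).
Proof. by rewrite /phi ge_max ler01 andbT. Qed.

Lemma phi1 : phi (1 : R) = 1.
Proof. by rewrite /phi max_l // ler01. Qed.

Lemma norminf_le1 m (A : 'cV[R]_m) :
  (norminf (map_mx phi A) <= 1) = [forall k, A k ord0 <= 1].
Proof.
apply/bigmax_leP/forallP => [[_ h] k|h]; last first.
  by split => // k _; rewrite mxE phi_norm phi_le1.
by have := h k isT; rewrite mxE phi_norm phi_le1.
Qed.

Lemma fconj_pen d (lam : R) (v : 'cV[R]_d) : 0 < lam ->
  fconj (fpen lam) v = if [forall k, v k ord0 <= lam] then 0%E else +oo%E.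
Proof.
move=> lam0; case: ifP => hv.
- apply/eqP; rewrite eq_le; apply/andP; split.
  + apply/ereal_supP => _ [x _ <-]; rewrite /fpen; case: ifP => hx; last first.
      by rewrite /= leNye.
    rewrite -EFinB lee_fin mulr_sumr -sumrB; apply: sumr_le0 => i _.
    have xi := forallP hx i; rewrite ger0_norm // subr_le0.
    by have := forallP hv i; nra.
  + rewrite /fconj; apply: ereal_sup_ubound; exists 0 => //; rewrite /fpen ifT; last first.
      by apply/forallP => k; rewrite mxE.
    rewrite !big1 => [|i _|i _]; rewrite ?mxE ?normr0 ?mulr0 //.
    by rewrite -EFinB subrr.
- have := negbT hv; rewrite negb_forall => /existsP [k]; rewrite -ltNge => hk.
  suff H : forall M : R, (M%:E <= fconj (fpen lam) v)%E.
    case: (fconj (fpen lam) v) H => [r| |] H //.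
    - by have := H (r + 1)%R; rewrite lee_fin => h; exfalso; lra.
    - by have := H 0.
  move=> M; apply: le_ereal_sup_tmp.
  pose t := Num.max M 0 / (v k ord0 - lam).
  have t0 : 0 <= t by rewrite divr_ge0 ?le_max ?lexx ?orbT // subr_ge0 ltW.
  exists ((\sum_(i < d) v i ord0 * (\col_j (if j == k then t else 0%R)) i ord0)%:E
     - fpen lam (\col_j (if j == k then t else 0%R)))%E.
    by exists (\col_j (if j == k then t else 0%R)).
  rewrite /fpen ifT; last by apply/forallP => j; rewrite mxE; case: ifP.
  rewrite -EFinB lee_fin (bigD1 k) //= big1; last first.
    by move=> i /negPf hi; rewrite mxE hi mulr0.
  rewrite (bigD1 k) //= big1; last by move=> i /negPf hi; rewrite mxE hi normr0.
  rewrite !mxE eqxx !addr0 ger0_norm //.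
  have -> : v k ord0 * t - lam * t = Num.max M 0.
    rewrite /t -mulrBl mulrC mulfVK //; by rewrite subr_eq0 gt_eqF.
  by rewrite le_max lexx.
Qed.

Lemma uconjN (u : R -> R) s :
  (- uconj u s = ereal_sup [set (u y - s * y)%:E | y in [set: R]])%E.
Proof.
rewrite /uconj ereal_infEN oppeK; congr ereal_sup; apply/seteqP; split.
  by move=> _ /= [_ [z _ <-] <-]; exists z => //; rewrite -EFinN opprB.
by move=> _ /= [z _ <-]; exists (s * z - u z)%:E; [exists z|rewrite -EFinN opprB].
Qed.

Lemma uconj_ltey (u : R -> R) s : (uconj u s < +oo)%E.
Proof.
apply: (@le_lt_trans _ _ (s * 0 - u 0)%:E); last exact: ltry.
by apply: ereal_inf_lbound; exists 0.
Qed.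

Lemma fconj_H n (u : R -> R) (lam : R) (th : 'cV[R]_n) : (0 < n)%N ->
  fconj (fun z : 'cV[R]_n => (Hfun u z)%:E) ((- lam) *: th) = (- Dobj u lam th)%E.
Proof.
move=> n0; have nz : n%:R != 0 :> R by rewrite pnatr_eq0 -lt0n.
have ni0 : 0 < (n%:R : R)^-1 by rewrite invr_gt0 ltr0n.
pose g (i : 'I_n) y := u y - n%:R * lam * th i ord0 * y.
have key : forall x : 'cV[R]_n,
    \sum_(i < n) ((- lam) *: th) i ord0 * x i ord0 - Hfun u x
    = (n%:R)^-1 * \sum_(i < n) g i (x i ord0).
  move=> x; rewrite /Hfun /g mulNr opprK sumrB mulrBr addrC; congr (_ + _).
  rewrite mulr_sumr -sumrN; apply: eq_bigr => i _; rewrite mxE; field.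
  by [].
rewrite /Dobj -muleN -sumeN; last first.
  move=> i j _ _; rewrite /adde_def.
  by rewrite !(lt_eqF (uconj_ltey _ _)) /= andbF.
under eq_bigr do rewrite uconjN.
apply/eqP; rewrite eq_le; apply/andP; split.
- apply/ereal_supP => _ [x _ <-]; rewrite -EFinB key EFinM lee_pmul2l //.
  rewrite -sumEFin; apply: lee_sum => i _; apply: ereal_sup_ubound.
  by exists (x i ord0).
- set S := fconj _ _.
  have H : (\sum_(i < n) ereal_sup [set (u y - n%:R * lam * th i ord0 * y)%:E | y in [set: R]]
            <= (n%:R)%:E * S)%E.
    apply: (sumsup_le _ g) => f.
    have := @ereal_sup_ubound _ [set ((\sum_(i < n) ((- lam) *: th) i ord0 * x i ord0)%:E - (Hfun u x)%:E)%E | x in [set: 'cV[R]_n]] ((\sum_(i < n) ((- lam) *: th) i ord0 * (\col_j f j) i ord0)%:E - (Hfun u (\col_j f j))%:E)%E.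
    move=> /(_ (ex_intro2 _ _ _ I erefl)).
    rewrite -/S -EFinB key => h.
    rewrite -[X in (X <= _)%E](_ : (n%:R)%:E * ((n%:R)^-1 * \sum_(i < n) g i ((\col_j f j) i ord0))%:E = _)%E.
      by rewrite lee_pmul2l // lte_fin ltr0n.
    rewrite -EFinM mulrA mulfV // mul1r; congr (_ %:E); apply: eq_bigr => i _.
    by rewrite mxE.
  apply: (@le_trans _ _ ((n%:R^-1)%:E * ((n%:R)%:E * S))%E).
    by rewrite lee_pmul2l // lte_fin.
  by rewrite muleA -EFinM mulVf // mul1e.
Qed.

Lemma diff_coord m (M : 'cV[R]_m) i :
  'd (fun N : 'cV[R]_m => N i ord0) M = (fun N : 'cV[R]_m => N i ord0) :> (_ -> R).
Proof.
have @f : {linear 'cV[R]_m -> R}.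
  by exists (fun N : 'M[R]_(_, _) => N i ord0); do 2![eexists]; do ?[constructor];
     rewrite ?mxE// => ? *; rewrite ?mxE//; move=> ?; rewrite !mxE.
rewrite (_ : (fun _ => _) = f) //; rewrite diff_lin //; exact: coord_continuous.
Qed.

Lemma diff_sum_fun m n (f : 'I_n -> 'cV[R]_m -> R) x :
  (forall i, differentiable (f i) x) ->
  'd (\sum_(i < n) f i) x = \sum_(i < n) ('d (f i) x : _ -> R) :> (_ -> R).
Proof.
elim: n f => [|n IH] f df.
  by rewrite !big_ord0; exact: diff_cst.
rewrite !big_ord_recr /= diffD; last by apply: df.
  by rewrite IH // => i; apply: df.
by apply: differentiable_sum => i; apply: df.
Qed.

Lemma dHfun n (u : R -> R) (z v : 'cV[R]_n) : (forall x, derivable u x 1) ->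
  'd (Hfun u) z v = - (n%:R)^-1 * \sum_(i < n) v i ord0 * 'D_1 u (z i ord0).
Proof.
move=> du.
have hd : forall i, differentiable (u \o (fun N : 'cV[R]_n => N i ord0)) z.
  move=> i; apply: differentiable_comp; first exact: differentiable_coord.
  by apply/derivable1_diffP.
have -> : Hfun u = (- (n%:R)^-1) *: \sum_(i < n) (u \o (fun N : 'cV[R]_n => N i ord0)).
  by apply/funext => y; rewrite /Hfun /= fct_sumE.
have hs : differentiable (\sum_(i < n) (u \o (fun N : 'cV[R]_n => N i ord0))) z.
  by apply: differentiable_sum.
have := diffZ (- (n%:R)^-1) hs => /(congr1 (fun f => f v)) /= ->.
rewrite /= diff_sum_fun // fct_sumE; congr (_ * _); apply: eq_bigr => i _.
rewrite diff_comp; [|exact: differentiable_coord|by apply/derivable1_diffP].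
rewrite /= diff_coord deriveE; last by apply/derivable1_diffP.
by rewrite -[in LHS](mulr1 (v i ord0)) -[v i ord0 * 1]/(v i ord0 *: 1) linearZ.
Qed.

Lemma cvg_finsum n (F : 'I_n -> R -> R) (L : 'I_n -> R) :
  (forall i, F i x @[x --> (0:R)^'] --> L i) ->
  (\sum_(i < n) F i x) @[x --> (0:R)^'] --> \sum_(i < n) L i.
Proof.
elim: n F L => [|n IH] F L H.
  rewrite big_ord0; under eq_fun do rewrite big_ord0; exact: cvg_cst.
rewrite big_ord_recr; under eq_fun do rewrite big_ord_recr.
apply: cvgD; last exact: H.
by apply: IH => i; apply: H.
Qed.

Lemma foc_lim (u : R -> R) (du : forall x, derivable u x 1) n (c K : R)
  (a b : 'I_n -> R) :
  (fun t => c * \sum_(j < n) t^-1 * (u (t * b j + a j) - u (a j)) + K) x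
     @[x --> (0:R)^'] --> c * \sum_(j < n) b j * 'D_1 u (a j) + K.
Proof.
apply: cvgD; last exact: cvg_cst.
apply: cvgMl_tmp; apply: cvg_finsum => j; exact: dq_cvg.
Qed.

Lemma foc_eq (u : R -> R) n (c K t : R) (a b : 'I_n -> R) : t != 0 ->
  c * \sum_(j < n) t^-1 * (u (t * b j + a j) - u (a j)) + K =
  t^-1 * ((c * \sum_(j < n) u (t * b j + a j) + K * t) - c * \sum_(j < n) u (a j)).
Proof.
move=> t0; rewrite -[in LHS]mulr_sumr sumrB; field.
by [].
Qed.

Lemma foc_right (u : R -> R) (du : forall x, derivable u x 1) n (c K : R)
  (a b : 'I_n -> R) e : 0 < e ->
  (forall t, 0 < t < e -> c * \sum_(j < n) u (a j) <= c * \sum_(j < n) u (t * b j + a j) + K * t) ->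
  0 <= c * \sum_(j < n) b j * 'D_1 u (a j) + K.
Proof.
move=> e0 H; apply: (@lim_ge_right _ _ _ e e0 (foc_lim u du _ c K a b)).
move=> t /andP[t0 te]; rewrite foc_eq ?gt_eqF //.
by apply: mulr_ge0; [rewrite invr_ge0 ltW|rewrite subr_ge0 H // t0 te].
Qed.

Lemma foc_left (u : R -> R) (du : forall x, derivable u x 1) n (c K : R)
  (a b : 'I_n -> R) e : 0 < e ->
  (forall t, - e < t < 0 -> c * \sum_(j < n) u (a j) <= c * \sum_(j < n) u (t * b j + a j) + K * t) ->
  c * \sum_(j < n) b j * 'D_1 u (a j) + K <= 0.
Proof.
move=> e0 H; apply: (@lim_le_left _ _ _ e e0 (foc_lim u du _ c K a b)).
move=> t /andP[te t0]; rewrite foc_eq ?lt_eqF //.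
apply: mulr_le0_ge0; first by rewrite invr_le0 ltW.
by rewrite subr_ge0 H // te t0.
Qed.

Lemma sum_ite m (k : 'I_m) (F : 'I_m -> R) (t : R) :
  \sum_(i < m) (if i == k then t else 0) * F i = t * F k.
Proof.
rewrite (bigD1 k) //= eqxx big1 ?addr0 // => i /negPf ->; by rewrite mul0r.
Qed.

Lemma sum_ite1 m (k : 'I_m) (t : R) :
  \sum_(i < m) (if i == k then t else 0) = t.
Proof.
rewrite (bigD1 k) //= eqxx big1 ?addr0 // => i /negPf -> //.
Qed.
End S.

Theorem theorem3 (R : realType) (n d : nat) (X : 'M[R]_(n, d)) (u : R -> R) (lam : R) :
  (0 < n)%N ->
  utility u ->
  (forall x : R, derivable u x 1) ->
  convex_fun (hfun u X) ->
  (forall w : 'cV[R]_d, differentiable (hfun u X) w) ->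
  (exists L : R, forall (w v x : 'cV[R]_d),
      `|'d (hfun u X) w x - 'd (hfun u X) v x| <= L * `|w - v| * `|x|) ->
  0 < lam ->
  (* the Fenchel--Rockafellar dual of the primal is D_lambda on C_D *)
  (forall th : 'cV[R]_n,
      FRdual u lam X th =
      (if (norminf (map_mx phi (X^T *m th)) <= 1)%R then Dobj u lam th else -oo)%E) /\
  (* optimality conditions for an optimal primal-dual pair *)
  (forall (ws : 'cV[R]_d) (ths : 'cV[R]_n),
      CP u lam X ws ->
      (forall w, CP u lam X w -> (Pobj u lam X ws <= Pobj u lam X w)%E) ->
      CD u lam X ths ->
      (forall th, CD u lam X th -> (Dobj u lam th <= Dobj u lam ths)%E) ->
      (forall v : 'cV[R]_n,
          'd (Hfun u) (X *m ws) v = \sum_(i < n) (- lam * ths i ord0) * v i ord0) /\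
      (forall j : 'I_d,
          (ws j ord0 = 0 -> phi (((col j X)^T *m ths) ord0 ord0) <= 1) /\
          (ws j ord0 <> 0 ->
             phi (((col j X)^T *m ths) ord0 ord0) = 1 /\
             ((ths^T *m col j X) ord0 ord0) * ws j ord0 = `|ws j ord0|))).
Proof.
move=> n0 hu du _ _ _ lam0.
have hc := hu.2.
have nz : n%:R != 0 :> R by rewrite pnatr_eq0 -lt0n.
have nr0 : 0 < (n%:R : R) by rewrite ltr0n.
have ni0 : 0 < (n%:R : R)^-1 by rewrite invr_gt0.
split.
  move=> th; rewrite /FRdual fconj_pen // fconj_H // oppeK norminf_le1.
  have -> : [forall k, (lam *: (X^T *m th)) k ord0 <= lam] =
            [forall k, (X^T *m th) k ord0 <= 1].
    by apply: eq_forallb => k; rewrite mxE -{2}(mulr1 lam) ler_pM2l.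
  by case: ifP => _; rewrite ?oppe0 ?add0e.
move=> ws ths [_ wpos] wopt [thdom thn] thopt.
have wpos' : forall k, 0 <= ws k ord0 := wpos.
have thn' : forall k, (X^T *m ths) k ord0 <= 1.
  by move=> k; move: thn; rewrite /= norminf_le1 => /forallP; apply.
pose zz j := \sum_(k < d) ws k ord0 * X j k.
pose P (w : 'cV[R]_d) := - (n%:R)^-1 * \sum_(j < n) u (\sum_(k < d) w k ord0 * X j k)
   + lam * \sum_(k < d) `|w k ord0|.
have Popt : forall w : 'cV[R]_d, (forall k, 0 <= w k ord0) -> P ws <= P w.
  move=> w hw; have := wopt w; rewrite /Pobj lee_fin; apply; split => //.
  by rewrite /domP /Pobj /=; exact: ltry.
pose S := \sum_(k < d) `|ws k ord0|.
have foc1 : forall k, 0 <= - (n%:R)^-1 * \sum_(j < n) X j k * 'D_1 u (zz j) + lam.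
  move=> k; apply: (foc_right u du _ (- (n%:R)^-1) lam zz (fun j => X j k) _ ltr01).
  move=> t /andP[t0 t1].
  pose w := \col_i (ws i ord0 + (if i == k then t else 0)).
  have hw : forall i, 0 <= w i ord0.
    by move=> i; rewrite mxE; case: (i == k); rewrite ?addr0 // addr_ge0 // ltW.
  have := Popt w hw; rewrite /P.
  have -> : \sum_(j < n) u (\sum_(i < d) w i ord0 * X j i) =
            \sum_(j < n) u (t * X j k + zz j).
    apply: eq_bigr => j _; congr u.
    under eq_bigr do rewrite mxE mulrDl.
    by rewrite big_split /= sum_ite addrC.
  have -> : \sum_(i < d) `|w i ord0| = S + t.
    under eq_bigr do rewrite (ger0_norm (hw _)) mxE.
    rewrite big_split /= sum_ite1; congr (_ + _).
    by apply: eq_bigr => i _; rewrite ger0_norm.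
  rewrite -/S; lra.
have foc2 : - (n%:R)^-1 * \sum_(j < n) zz j * 'D_1 u (zz j) + lam * S = 0.
  have H : forall t, -1 < t < 1 ->
      - (n%:R)^-1 * \sum_(j < n) u (zz j) <=
      - (n%:R)^-1 * \sum_(j < n) u (t * zz j + zz j) + lam * S * t.
    move=> t /andP[t0 t1].
    have t0' : 0 <= 1 + t by lra.
    pose w := (1 + t) *: ws.
    have hw : forall i, 0 <= w i ord0 by move=> i; rewrite mxE mulr_ge0.
    have := Popt w hw; rewrite /P.
    have -> : \sum_(j < n) u (\sum_(i < d) w i ord0 * X j i) =
              \sum_(j < n) u (t * zz j + zz j).
      apply: eq_bigr => j _; congr u.
      have -> : t * zz j + zz j = (1 + t) * zz j by ring.
      by rewrite /zz mulr_sumr; apply: eq_bigr => i _; rewrite mxE mulrA.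
    have -> : \sum_(i < d) `|w i ord0| = (1 + t) * S.
      by rewrite /S mulr_sumr; apply: eq_bigr => i _; rewrite mxE normrM ger0_norm.
    rewrite -/S; nra.
  apply/eqP; rewrite eq_le; apply/andP; split.
    apply: (foc_left u du _ (- (n%:R)^-1) (lam * S) zz zz _ ltr01) => t /andP[t0 t1].
    by apply: H; rewrite t0 /=; lra.
  apply: (foc_right u du _ (- (n%:R)^-1) (lam * S) zz zz _ ltr01) => t /andP[t0 t1].
  by apply: H; rewrite t1 andbT; lra.
have tang : forall j y, u y <= u (zz j) + 'D_1 u (zz j) * (y - zz j).
  by move=> j y; apply: tangent.
have uc_hat : forall j, uconj u ('D_1 u (zz j)) = ('D_1 u (zz j) * zz j - u (zz j))%:E.
  move=> j; apply/eqP; rewrite eq_le; apply/andP; split.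
    by apply: ereal_inf_lbound; exists (zz j).
  apply/ereal_infP => _ [y _ <-]; rewrite lee_fin; have := tang j y; nra.
pose thh := \col_j ('D_1 u (zz j) / (n%:R * lam)).
have nlthh : forall j, n%:R * lam * thh j ord0 = 'D_1 u (zz j).
  move=> j; rewrite mxE; field.
  by rewrite nz gt_eqF.
have Dthh : Dobj u lam thh =
    ((n%:R)^-1 * \sum_(j < n) ('D_1 u (zz j) * zz j - u (zz j)))%:E.
  rewrite /Dobj; under eq_bigr do rewrite nlthh uc_hat.
  by rewrite sumEFin -EFinM.
have thh_CD : CD u lam X thh.
  split; first by rewrite /domD /= Dthh; exact: ltNyr.
  rewrite /= norminf_le1; apply/forallP => k; rewrite mxE.
  under eq_bigr do rewrite !mxE mulrA.
  rewrite -mulr_suml ler_pdivrMr ?mul1r ?mulr_gt0 //.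
  by have := foc1 k; rewrite mulNr addrC subr_ge0 ler_pdivrMl.
have PD : (n%:R)^-1 * \sum_(j < n) ('D_1 u (zz j) * zz j - u (zz j)) = P ws.
  rewrite /P sumrB mulrBr -/S.
  have -> : \sum_(j < n) 'D_1 u (zz j) * zz j = \sum_(j < n) zz j * 'D_1 u (zz j).
    by apply: eq_bigr => j _; rewrite mulrC.
  by move: foc2; rewrite -/(zz) mulNr => foc2; lra.
have le1 : ((P ws)%:E <= Dobj u lam ths)%E.
  by rewrite -PD -Dthh; apply: thopt.
have hfin : forall j, uconj u (n%:R * lam * ths j ord0) \is a fin_num.
  move=> j; rewrite fin_numE (lt_eqF (uconj_ltey _ _)) andbT.
  apply/negP => /eqP hj.
  have hD : Dobj u lam ths = -oo%E.
    rewrite /Dobj.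
    have -> : (\sum_(i < n) uconj u (n%:R * lam * ths i ord0))%E = -oo%E.
      by apply/esum_eqNyP; exists j; split => //; rewrite mem_index_enum.
    by rewrite mulrNy gtr0_sg // mul1e.
  by move: thdom; rewrite /domD /= hD.
pose al j := fine (uconj u (n%:R * lam * ths j ord0)).
have hal : forall j, uconj u (n%:R * lam * ths j ord0) = (al j)%:E.
  by move=> j; rewrite /al fineK.
pose b j := n%:R * lam * ths j ord0 * zz j - u (zz j).
have halb : forall j, al j <= b j.
  move=> j; rewrite -lee_fin -hal; apply: ereal_inf_lbound; exists (zz j) => //.
have Dths : Dobj u lam ths = ((n%:R)^-1 * \sum_(j < n) al j)%:E.
  rewrite /Dobj; under eq_bigr do rewrite hal.
  by rewrite sumEFin -EFinM.
pose be k := (X^T *m ths) k ord0.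
have hbe : forall k, be k = \sum_(j < n) X j k * ths j ord0.
  by move=> k; rewrite /be mxE; apply: eq_bigr => j _; rewrite mxE.
have exch : \sum_(j < n) ths j ord0 * zz j = \sum_(k < d) ws k ord0 * be k.
  rewrite /zz; under eq_bigr do rewrite mulr_sumr.
  rewrite exchange_big /=; apply: eq_bigr => k _.
  rewrite hbe mulr_sumr; apply: eq_bigr => j _; ring.
have sumb : \sum_(j < n) b j =
    n%:R * lam * \sum_(k < d) ws k ord0 * be k - \sum_(j < n) u (zz j).
  rewrite /b sumrB -exch mulr_sumr; congr (_ - _).
  by apply: eq_bigr => j _; rewrite mulrA.
have SW : S = \sum_(k < d) ws k ord0.
  by apply: eq_bigr => k _; rewrite ger0_norm.
have VW : \sum_(k < d) ws k ord0 * be k <= \sum_(k < d) ws k ord0.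
  apply: ler_sum => k _; rewrite -{2}(mulr1 (ws k ord0)).
  by apply: ler_wpM2l => //; exact: thn'.
have AB : \sum_(j < n) al j <= \sum_(j < n) b j by apply: ler_sum => j _.
have F1 : P ws <= (n%:R)^-1 * \sum_(j < n) al j by rewrite -lee_fin -Dths.
have nB : (n%:R)^-1 * \sum_(j < n) b j =
    lam * \sum_(k < d) ws k ord0 * be k - (n%:R)^-1 * \sum_(j < n) u (zz j).
  by rewrite sumb mulrBr !mulrA mulVf // mul1r.
have AB' : (n%:R)^-1 * \sum_(j < n) al j <= (n%:R)^-1 * \sum_(j < n) b j.
  by rewrite ler_pM2l.
have VW' : lam * \sum_(k < d) ws k ord0 * be k <= lam * \sum_(k < d) ws k ord0.
  by rewrite ler_pM2l.
move: F1; rewrite /P -/S SW => F1.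
have eA : (n%:R)^-1 * \sum_(j < n) al j = (n%:R)^-1 * \sum_(j < n) b j by lra.
have eV : lam * \sum_(k < d) ws k ord0 * be k = lam * \sum_(k < d) ws k ord0 by lra.
have eA' : \sum_(j < n) (b j - al j) = 0.
  by rewrite sumrB; apply/eqP; rewrite subr_eq0; apply/eqP; apply: (mulfI (invr_neq0 nz)).
have eV' : \sum_(k < d) ws k ord0 * (1 - be k) = 0.
  under eq_bigr do rewrite mulrBr mulr1.
  rewrite sumrB; apply/eqP; rewrite subr_eq0; apply/eqP.
  by apply: (mulfI (lt0r_neq0 lam0)); rewrite eV.
have ealb : forall j, al j = b j.
  move=> j; apply/eqP; rewrite eq_sym -subr_eq0; apply/eqP.
  by apply: (psumr_eq0P _ eA') => // i _; rewrite subr_ge0.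
have ewb : forall k, ws k ord0 * (1 - be k) = 0.
  move=> k; apply: (psumr_eq0P _ eV') => // i _.
  by rewrite mulr_ge0 // subr_ge0; exact: thn'.
have sD : forall j, 'D_1 u (zz j) = n%:R * lam * ths j ord0.
  move=> j; apply: subgrad_deriv => // y.
  have := @ereal_inf_lbound _ [set ((n%:R * lam * ths j ord0) * z - u z)%:E | z in [set: R]]
     ((n%:R * lam * ths j ord0) * y - u y)%:E (ex_intro2 _ _ y I erefl).
  rewrite -/(uconj u _) hal ealb /b lee_fin; nra.
split.
  move=> v; rewrite dHfun // mulr_sumr; apply: eq_bigr => i _.
  have -> : (X *m ws) i ord0 = zz i.
    by rewrite mxE; apply: eq_bigr => k _; rewrite mulrC.
  by rewrite sD; field.
move=> j.
have hb1 : ((col j X)^T *m ths) ord0 ord0 = be j.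
  by rewrite hbe !mxE; apply: eq_bigr => i _; rewrite !mxE.
have hb2 : (ths^T *m col j X) ord0 ord0 = be j.
  by rewrite hbe !mxE; apply: eq_bigr => i _; rewrite !mxE mulrC.
split.
  by move=> _; rewrite hb1 phi_le1; exact: thn'.
move=> hwj.
have be1 : be j = 1.
  have := ewb j; move/eqP; rewrite mulf_eq0 => /orP[/eqP h|]; first by [].
  by rewrite subr_eq0 => /eqP <-.
by rewrite hb1 hb2 be1 phi1 mul1r ger0_norm.
Qed.
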